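(* Let $h$ be an odd positive integer, $m=3h$, $e=3^h$, and for $u\in\mathrm{GF}(3^m)$ let $Q_u(y)=\mathrm{Tr}(uy^{e+1}+y^2)$, $y\in\mathrm{GF}(3^m)$. Then for every $u\in\mathrm{GF}(3^m)$, at least one of the quadratic forms $Q_u$ and $Q_{-1-u}$ has rank $m$.
   Context: $\mathrm{Tr}$ denotes the absolute trace from $\mathrm{GF}(3^m)$ onto $\mathrm{GF}(3)$. The rank of a quadratic form $Q:\mathrm{GF}(3^m)\to\mathrm{GF}(3)$ is $m-\dim_{\mathrm{GF}(3)}V_Q$, where $V_Q=\{x: Q(x+z)-Q(x)-Q(z)=0\ \text{for all } z\in\mathrm{GF}(3^m)\}$. (For $Q_u$ one has $Q_u(y+z)-Q_u(y)-Q_u(z)=\mathrm{Tr}((u^{e^2}y^{e^2}+uy^e-y)z)$.) *)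

(* Defs.v *)
From HB Require Import structures.
From mathcomp Require Import all_boot all_order all_algebra all_field.
Set Implicit Arguments. Unset Strict Implicit. Unset Printing Implicit Defensive.
Import GRing.Theory.
Local Open Scope ring_scope.

(* Absolute trace GF(3^m) -> GF(3): Tr x = sum_{i<m} x^(3^i); its values lie
   in the prime subfield of F, which we identify with GF(3). *)
Definition tr (F : finFieldType) (m : nat) (x : F) : F :=
  \sum_(i < m) x ^+ (3 ^ i)%N.

Definition Qu (F : finFieldType) (m h : nat) (u : F) (y : F) : F :=
  tr m (u * y ^+ (3 ^ h).+1 + y ^+ 2).

Definition radical (F : finFieldType) (Q : F -> F) : {set F} :=
  [set x | [forall z, Q (x + z) - Q x - Q z == 0]].

(* rank Q = m - dim_{GF(3)} V_Q; V_Q is a GF(3)-subspace of GF(3^m), so its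
   GF(3)-dimension is log_3 of its cardinality. *)
Definition qf_rank (F : finFieldType) (m : nat) (Q : F -> F) : nat :=
  (m - logn 3 #|radical Q|)%N.

(* Main.v *)
Require Import Defs.
From HB Require Import structures.
From mathcomp Require Import all_boot all_order all_algebra all_field.
From mathcomp Require Import zify ring.
Set Implicit Arguments. Unset Strict Implicit.
Import GRing.Theory.
Local Open Scope ring_scope.

Lemma nat3 (F : finFieldType) k : (3 \in [pchar F])%N -> [pchar F].-nat (3 ^ k)%N.
Proof.
move=> c3; rewrite (eq_pnat _ (pcharf_eq c3)) pnatX; apply/orP; left.
exact: pnat_id.
Qed.

Lemma frobD (F : finFieldType) k (x y : F) : (3 \in [pchar F])%N ->
  (x + y) ^+ (3 ^ k) = x ^+ (3 ^ k) + y ^+ (3 ^ k).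
Proof. by move=> c3; rewrite exprDn_pchar // nat3. Qed.

Lemma frobN (F : finFieldType) k (x : F) : (3 \in [pchar F])%N ->
  (- x) ^+ (3 ^ k) = - x ^+ (3 ^ k).
Proof. by move=> c3; rewrite exprNn_pchar // nat3. Qed.

Lemma three0 (F : finFieldType) : (3 \in [pchar F])%N -> (3 : F) = 0.
Proof. by move=> c3; rewrite -(pcharf0 c3). Qed.

Lemma trD (F : finFieldType) m (x y : F) : (3 \in [pchar F])%N ->
  tr m (x + y) = tr m x + tr m y.
Proof. by move=> c3; rewrite /tr -big_split /=; apply: eq_bigr => i _; rewrite frobD. Qed.

Lemma trN (F : finFieldType) m (x : F) : (3 \in [pchar F])%N ->
  tr m (- x) = - tr m x.
Proof. by move=> c3; rewrite /tr -sumrN; apply: eq_bigr => i _; rewrite frobN. Qed.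

Lemma tr3 (F : finFieldType) m (x : F) : x ^+ (3 ^ m) = x ->
  tr m (x ^+ 3) = tr m x.
Proof.
move=> xm; rewrite /tr; case: m xm => [|m] xm; first by rewrite !big_ord0.
rewrite big_ord_recr [RHS]big_ord_recl /= -exprM -expnS xm expn0 expr1 addrC.
congr (_ + _); apply: eq_bigr => i _; by rewrite -exprM -expnS.
Qed.

Lemma tr3k (F : finFieldType) m k (x : F) : x ^+ (3 ^ m) = x ->
  tr m (x ^+ (3 ^ k)) = tr m x.
Proof.
move=> xm; elim: k => [|k IH]; first by rewrite expr1.
rewrite expnSr exprM tr3 ?IH //; by rewrite -exprM mulnC exprM xm.
Qed.

Lemma trB3 (F : finFieldType) m (a b c : F) : (3 \in [pchar F])%N ->
  tr m a - tr m b - tr m c = tr m (a - b - c).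
Proof. by move=> c3; rewrite !trD // !trN. Qed.

Definition Lu (F : finFieldType) h (u y : F) : F :=
  u * y ^+ (3 ^ h) + (u * y) ^+ (3 ^ (h + h)) - y.

Lemma polar (F : finFieldType) h (u y z : F) : (3 \in [pchar F])%N ->
  #|F| = (3 ^ (3 * h))%N ->
  Qu (3 * h) h u (y + z) - Qu (3 * h) h u y - Qu (3 * h) h u z =
  tr (3 * h) (Lu h u y * z).
Proof.
move=> c3 cF.
have fx : forall x : F, x ^+ (3 ^ (3 * h)) = x by move=> x; rewrite -cF expf_card.
have E : tr (3 * h) (u * y * z ^+ (3 ^ h)) = tr (3 * h) ((u * y) ^+ (3 ^ (h + h)) * z).
  rewrite -(@tr3k _ (3 * h) (h + h) _ (fx _)) exprMn -exprM -expnD.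
  by rewrite (_ : (h + (h + h) = 3 * h)%N) ?fx //; lia.
have t3 := three0 c3.
rewrite /Qu trB3 //.
rewrite (_ : tr _ (Lu h u y * z) = tr (3 * h) (u * y ^+ (3 ^ h) * z - y * z) +
   tr (3 * h) ((u * y) ^+ (3 ^ (h + h)) * z)); last first.
  by rewrite -trD //; f_equal; rewrite /Lu; ring.
rewrite -E -trD //; f_equal; rewrite !exprS frobD //.
set a := y ^+ (3 ^ h); set b := z ^+ (3 ^ h).
transitivity (u * a * z + - (y * z) + u * y * b + 3 * (y * z)); first ring.
by rewrite t3 mul0r addr0 addrAC.
Qed.
Lemma size_sumX (F : finFieldType) k :
  (size ((\sum_(i < k) 'X^(3 ^ i)%N)%R : {poly F}) <= 3 ^ k)%N.
Proof.
elim: k => [|k IH]; first by rewrite big_ord0 size_poly0.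
rewrite big_ord_recr /=; apply: leq_trans (size_polyD _ _) _.
rewrite geq_max size_polyXn expnS; apply/andP; split.
  apply: leq_trans IH _; rewrite leq_pmull //.
have := expn_gt0 3 k; rewrite /=; lia.
Qed.

Lemma tr_nonzero (F : finFieldType) m : (0 < m)%N -> #|F| = (3 ^ m)%N ->
  exists w : F, tr m w != 0.
Proof.
move=> m0 cF; case/boolP: [exists w : F, tr m w != 0] => [/existsP //| /existsPn H]; exfalso.
case: m m0 cF H => // n _ cF H.
set P : {poly F} := (\sum_(i < n.+1) 'X^(3 ^ i)%N)%R.
have sP : size P = (3 ^ n).+1.
  rewrite /P big_ord_recr /= addrC size_polyDl size_polyXn //.
  by apply: leq_ltn_trans (size_sumX _ _) _.
have P0 : P != 0 by rewrite -size_poly_gt0 sP.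
have Hall : all (root P) (enum F).
  apply/allP => x _; rewrite /root /P horner_sum.
  have /negPn/eqP Hx := H x; apply/eqP; rewrite -[X in _ = X]Hx /tr.
  by apply: eq_bigr => i _; rewrite hornerXn.
have := max_poly_roots P0 Hall (enum_uniq _).
rewrite sP -cardE cF expnS; have := expn_gt0 3 n; lia.
Qed.

Lemma radL (F : finFieldType) h (u y : F) : (3 \in [pchar F])%N ->
  #|F| = (3 ^ (3 * h))%N -> (0 < h)%N ->
  y \in radical (Qu (3 * h) h u) -> Lu h u y = 0.
Proof.
move=> c3 cF h0; rewrite inE => /forallP H.
apply/eqP; apply/negPn/negP => L0.
have h3 : (0 < 3 * h)%N by lia.
have [w tw] := tr_nonzero h3 cF.
have := H ((Lu h u y)^-1 * w); rewrite polar // mulrA mulfV // mul1r.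
by rewrite (negPf tw).
Qed.

Definition Dt (F : finFieldType) (a b c : F) : F :=
  -1 + a ^+ 2 + b ^+ 2 + c ^+ 2 + 2 * a * b * c.

Lemma cramer (F : finFieldType) (a b c p q r : F) :
  a * q + c * r - p = 0 -> b * r + a * p - q = 0 -> c * p + b * q - r = 0 ->
  p != 0 -> Dt a b c = 0.
Proof.
move=> E0 E1 E2 p0.
have : Dt a b c * p = (1 - b ^+ 2) * (a * q + c * r - p)
   + (a + b * c) * (b * r + a * p - q) + (a * b + c) * (c * p + b * q - r).
  rewrite /Dt; ring.
rewrite E0 E1 E2 !mulr0 !addr0 => /eqP; rewrite mulf_eq0 (negPf p0) orbF.
by move/eqP.
Qed.

Lemma detzero (F : finFieldType) h (u y : F) : (3 \in [pchar F])%N ->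
  #|F| = (3 ^ (3 * h))%N -> y != 0 -> Lu h u y = 0 ->
  Dt u (u ^+ (3 ^ h)) (u ^+ (3 ^ h) ^+ (3 ^ h)) = 0.
Proof.
move=> c3 cF y0 L0.
set s := fun x : F => x ^+ (3 ^ h).
have sD : forall x z, s (x + z) = s x + s z by move=> x z; rewrite /s frobD.
have sN : forall x, s (- x) = - s x by move=> x; rewrite /s frobN.
have sM : forall x z, s (x * z) = s x * s z by move=> x z; rewrite /s exprMn.
have s3 : forall x, s (s (s x)) = x.
move=> x; rewrite /s -!exprM -!expnD (_ : (h + (h + h) = 3 * h)%N) -?cF ?expf_card //; lia.
have s2 : forall x, x ^+ (3 ^ (h + h)) = s (s x) by move=> x; rewrite /s -exprM -expnD.
have E0 : u * s y + s (s u) * s (s y) - y = 0.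
  by rewrite -L0 /Lu s2 !sM.
have s0 : s 0 = 0 by rewrite /s expr0n expn_eq0.
have E1 : s u * s (s y) + u * y - s y = 0.
  by have := congr1 s E0; rewrite s0 => <-; rewrite !sD sN !sM !s3.
have E2 : s (s u) * y + s u * s y - s (s y) = 0.
  by have := congr1 s E1; rewrite s0 => <-; rewrite !sD sN !sM !s3.
apply: (cramer (p := y) (q := s y) (r := s (s y))) => //.
Qed.

Lemma rank_full (F : finFieldType) m (Q : F -> F) :
  ~~ [exists y in radical Q, y != 0] -> qf_rank m Q = m.
Proof.
move/exists_inPn => H; rewrite /qf_rank.
have : (#|radical Q| <= 1)%N.
  rewrite -(cards1 (0 : F)); apply: subset_leq_card; apply/subsetP => x xR.
  by rewrite inE; have := H x xR; rewrite negbK.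
by case: #|_| => [|[|]] // _; rewrite ?logn0 ?logn1 subn0.
Qed.

Lemma noroot (F : finFieldType) h (s : F) : (3 \in [pchar F])%N -> odd h ->
  s ^+ 2 + 1 = 0 -> s ^+ (3 ^ h) = s -> False.
Proof.
move=> c3 oh s2 fs.
have t3 := three0 c3.
have s2' : s ^+ 2 = -1 by rewrite -[s ^+ 2]addr0 -(subrr 1) addrA s2 add0r.
have s9 : s ^+ 9 = s.
  by rewrite (_ : 9 = 2 * 4 + 1)%N // exprD exprM s2' expr1 -signr_odd /= expr0 mul1r.
have s9k : forall k, s ^+ (9 ^ k) = s.
  by elim=> [|k IH]; rewrite ?expr1 // expnS mulnC exprM IH.
have : s ^+ (3 ^ h) = - s.
  rewrite -(odd_double_half h) oh add1n expnS -muln2 mulnC expnM.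
  by rewrite expnAC (_ : 3 ^ 2 = 9)%N // exprM s9k exprS s2' mulrN1.
rewrite fs => ss.
have s0 : s = 0 by transitivity (3 * s - (s + s)); [ring | rewrite t3 mul0r {2}ss subrr sub0r oppr0].
by move: s2; rewrite s0 expr0n add0r => /eqP; rewrite oner_eq0.
Qed.

Theorem mainTheorem13 (h : nat) (F : finFieldType) :
  odd h -> (0 < h)%N ->
  (3 \in [pchar F])%N -> #|F| = (3 ^ (3 * h))%N ->
  forall u : F,
    qf_rank (3 * h) (Qu (3 * h) h u) = (3 * h)%N \/
    qf_rank (3 * h) (Qu (3 * h) h (- 1 - u)) = (3 * h)%N.
Proof.
move=> oh h0 c3 cF u.
have key : forall w : F, qf_rank (3 * h) (Qu (3 * h) h w) <> (3 * h)%N ->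
    Dt w (w ^+ (3 ^ h)) (w ^+ (3 ^ h) ^+ (3 ^ h)) = 0.
  move=> w ne; case/boolP: [exists y in radical (Qu (3 * h) h w), y != 0].
    case/exists_inP => y yR y0; apply: (detzero c3 cF y0).
    exact: radL.
  by move/rank_full => r; case: ne; apply: r.
have [e1|n1] := eqVneq (qf_rank (3 * h) (Qu (3 * h) h u)) (3 * h)%N; first by left.
have [e2|n2] := eqVneq (qf_rank (3 * h) (Qu (3 * h) h (- 1 - u))) (3 * h)%N; first by right.
exfalso.
have Du := key u (elimN eqP n1).
have Dv := key _ (elimN eqP n2).
set s := fun x : F => x ^+ (3 ^ h).
have sD : forall x z, s (x + z) = s x + s z by move=> x z; rewrite /s frobD.
have sN : forall x, s (- x) = - s x by move=> x; rewrite /s frobN.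
have s1 : s 1 = 1 by rewrite /s expr1n.
have s3 : forall x, s (s (s x)) = x.
  move=> x; rewrite /s -!exprM -!expnD (_ : (h + (h + h) = 3 * h)%N) -?cF ?expf_card //; lia.
have sv : forall x, s (- 1 - x) = - 1 - s x by move=> x; rewrite sD !sN s1.
have Dv' : Dt (-1 - u) (-1 - s u) (-1 - s (s u)) = 0 by rewrite -!sv; exact: Dv.

have Du' : Dt u (s u) (s (s u)) = 0 by exact: Du.
have t3 := three0 c3.
pose S := u + s u + s (s u).
have S2 : S ^+ 2 + 1 = 0.
  transitivity (3 * (S ^+ 2 - 2 * (u * s u + s u * s (s u) + s (s u) * u)) -
     (Dt u (s u) (s (s u)) + Dt (-1 - u) (-1 - s u) (-1 - s (s u)))).
    rewrite /S /Dt; ring.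
  by rewrite Du' Dv' t3 mul0r addr0 subrr.
apply: (noroot c3 oh S2).
by rewrite -/(s S) /S !sD s3 addrC addrA.
Qed.
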